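(* Let $R$ be a commutative elementary divisor domain and let $E=\mathrm{diag}(\varepsilon_1,\dots,\varepsilon_k,0,\dots,0)$ and $\Phi=\mathrm{diag}(\varphi_1,\dots,\varphi_t,0,\dots,0)$ be $n\times n$ $d$-matrices with $\varepsilon_k\ne0$, $\varphi_t\ne0$. If $\Phi\mid E$ (i.e. $k\le t$ and $\varphi_i\mid\varepsilon_i$ for $i=1,\dots,k$), then $\mathbf L(E,\Phi)$ consists exactly of the invertible $n\times n$ matrices $L=(l_{ij})$ such that $\frac{\varphi_i}{(\varphi_i,\varepsilon_j)}\mid l_{ij}$ for all $1\le i\le t$, $1\le j\le k$, and $l_{ij}=0$ for all $t<i\le n$, $1\le j\le k$ (entries in columns $k+1,\dots,n$ are unrestricted). If $\Phi\nmid E$, then $\mathbf L(E,\Phi)=\emptyset$.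
   Context: Elementary divisor domain: commutative integral domain over which every matrix is equivalent to a $d$-matrix, i.e. a diagonal matrix $\mathrm{diag}(\varphi_1,\dots)$ with $\varphi_i\mid\varphi_{i+1}$. For $n\times n$ $d$-matrices $E,\Phi$, the generating set is $\mathbf L(E,\Phi)=\{L\in GL_n(R):\ \exists S\in M_n(R),\ LE=\Phi S\}$. *)

(* Defs.v *)
From HB Require Import structures.
From mathcomp Require Import all_boot all_order all_algebra.
Set Implicit Arguments. Unset Strict Implicit. Unset Printing Implicit Defensive.
Import GRing.Theory.
Local Open Scope ring_scope.

Definition dvdr {R : comUnitRingType} (a b : R) : Prop := exists c : R, b = c * a.

Definition is_gcdr {R : comUnitRingType} (g a b : R) : Prop :=
  [/\ dvdr g a, dvdr g b & forall d, dvdr d a -> dvdr d b -> dvdr d g].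

Definition is_dmatrix {R : comUnitRingType} {m n : nat} (A : 'M[R]_(m, n)) : Prop :=
  (forall (i : 'I_m) (j : 'I_n), (i : nat) <> j -> A i j = 0) /\
  (forall (i i' : 'I_m) (j j' : 'I_n),
      (i : nat) = j -> (i' : nat) = j' -> (i' : nat) = i.+1 ->
      dvdr (A i j) (A i' j')).

Definition elementary_divisor_domain (R : idomainType) : Prop :=
  forall (m n : nat) (A : 'M[R]_(m, n)),
    exists (P : 'M[R]_m) (Q : 'M[R]_n),
      [/\ P \in unitmx, Q \in unitmx & is_dmatrix (P *m A *m Q)].

Definition Lset {R : comUnitRingType} {n : nat} (E Phi : 'M[R]_n) : 'M[R]_n -> Prop :=
  fun L => L \in unitmx /\ exists S : 'M[R]_n, L *m E = Phi *m S.

(* Phi | E for d-matrices E = diag(eps_1..eps_k,0..), Phi = diag(phi_1..phi_t,0..):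
   k <= t and phi_i | eps_i for i = 1..k (0-indexed here: i < k). *)
Definition dmx_dvd {R : comUnitRingType} {n : nat} (k t : nat) (Phi E : 'M[R]_n) : Prop :=
  (k <= t)%N /\ forall i : 'I_n, (i < k)%N -> dvdr (Phi i i) (E i i).

(* "phi / (phi, eps) divides l": for some gcd g of phi and eps, phi = q * g
   with q dividing l. *)
Definition quot_gcd_dvd {R : comUnitRingType} (phi eps l : R) : Prop :=
  exists g q : R, [/\ is_gcdr g phi eps, phi = q * g & dvdr q l].

(* Main.v *)
Require Import Defs.
From HB Require Import structures.
From mathcomp Require Import all_boot all_order all_algebra ring perm fingroup.
Set Implicit Arguments. Unset Strict Implicit. Unset Printing Implicit Defensive.
Import GRing.Theory.
Local Open Scope ring_scope.

Section Dv.
Variable R : idomainType.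
Implicit Types a b c : R.

Lemma dvdr_refl a : dvdr a a. Proof. by exists 1; rewrite mul1r. Qed.
Lemma dvdr_trans a b c : dvdr a b -> dvdr b c -> dvdr a c.
Proof. by move=> [x ->] [y ->]; exists (y * x); rewrite mulrA. Qed.
Lemma dvdr_mull a b c : dvdr a b -> dvdr a (c * b).
Proof. by move=> [x ->]; exists (c * x); rewrite mulrA. Qed.
Lemma dvdr_mulr a b c : dvdr a b -> dvdr a (b * c).
Proof. by move=> H; rewrite mulrC; apply: dvdr_mull. Qed.
Lemma dvdr_add a b c : dvdr a b -> dvdr a c -> dvdr a (b + c).
Proof. by move=> [x ->] [y ->]; exists (x + y); rewrite mulrDl. Qed.
Lemma dvdr0 a : dvdr a 0. Proof. by exists 0; rewrite mul0r. Qed.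

Lemma bezout (hR : elementary_divisor_domain R) a b :
  exists g x y, [/\ dvdr g a, dvdr g b & g = x * a + y * b].
Proof.
pose A : 'M[R]_(1, 2) := \matrix_(i < 1, j < 2) (if (j : nat) == 0%N then a else b).
have [P [Q [uP uQ [dD _]]]] := hR _ _ A.
have [D eD] : {D | D = P *m A *m Q} by eexists.
rewrite -eD in dD.
have eA : A = invmx P *m D *m invmx Q by rewrite eD mulmxA mulmxK // mulKmx.
have eD0 : D 0 0 = P 0 0 * Q 0 0 * a + P 0 0 * Q 1 0 * b.
  rewrite eD !mxE big_ord_recl big_ord1 !mxE !big_ord1 !mxE /=.
  have -> : (lift ord0 ord0 : 'I_2) = 1 by apply: val_inj.
  by rewrite [_ * a * _]mulrAC [_ * b * _]mulrAC.
have D01 : D 0 1 = 0 by apply: dD.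
have hAe j : A 0 j = invmx P 0 0 * invmx Q 0 j * D 0 0.
  rewrite eA !mxE big_ord_recl big_ord1 !mxE !big_ord1.
  have -> : (lift ord0 ord0 : 'I_2) = 1 by apply: val_inj.
  by rewrite D01 mulr0 mul0r addr0 mulrAC.
exists (D 0 0), (P 0 0 * Q 0 0), (P 0 0 * Q 1 0); split => //.
- by exists (invmx P 0 0 * invmx Q 0 0); rewrite -hAe mxE.
- by exists (invmx P 0 0 * invmx Q 0 1); rewrite -hAe mxE.
Qed.

Lemma key_fixed (phi eps l g x y q : R) :
  dvdr g eps -> g = x * phi + y * eps -> g != 0 -> phi = q * g ->
  dvdr phi (l * eps) -> dvdr q l.
Proof.
move=> [e he] hg g0 hq [s hs].
have h1 : x * q + y * e = 1.
  apply: (mulIf g0); rewrite mul1r [in RHS]hg hq he; ring.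
have h2 : l * e = s * q.
  apply: (mulIf g0); rewrite -mulrA -he hs hq; ring.
exists (l * x + y * s); rewrite -[LHS]mulr1 -h1 mulrDr [l * (y * e)]mulrCA h2; ring.
Qed.

Lemma qgd_dvd (phi eps l : R) : quot_gcd_dvd phi eps l -> dvdr phi (l * eps).
Proof.
move=> [g [q [[_ [e he] _] hq [c hc]]]].
by exists (c * e); rewrite hc he hq; ring.
Qed.

Lemma dvd_qgd (hR : elementary_divisor_domain R) (phi eps l : R) :
  dvdr phi (l * eps) -> quot_gcd_dvd phi eps l.
Proof.
move=> hd; have [g [x [y [gp ge hg]]]] := bezout hR phi eps.
have gcd : is_gcdr g phi eps.
  split=> // d dp de; rewrite hg; apply: dvdr_add; exact: dvdr_mull.
have [g0|g0] := eqVneq g 0.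
  exists g, 1; split=> //; last by exists l; rewrite mulr1.
  by case: gp => c ->; rewrite g0 !mulr0.
have [q hq] := gp.
exists g, q; split=> //; exact: (key_fixed ge hg g0 hq hd).
Qed.

Lemma mul_diag_r n (A D : 'M[R]_n) (hD : forall (i j : 'I_n), (i : nat) <> j -> D i j = 0) i j :
  (A *m D) i j = A i j * D j j.
Proof.
rewrite mxE (bigD1 j) //= big1 ?addr0 // => l /eqP nl.
by rewrite hD ?mulr0 // => /val_inj.
Qed.

Lemma mul_diag_l n (A D : 'M[R]_n) (hD : forall (i j : 'I_n), (i : nat) <> j -> D i j = 0) i j :
  (D *m A) i j = D i i * A i j.
Proof.
rewrite mxE (bigD1 i) //= big1 ?addr0 // => l /eqP nl.
by rewrite hD ?mul0r // => /esym /val_inj.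
Qed.

Lemma Lset_iff n (E Phi L : 'M[R]_n) : is_dmatrix E -> is_dmatrix Phi ->
  Lset E Phi L <-> (L \in unitmx /\ forall i j, dvdr (Phi i i) (L i j * E j j)).
Proof.
move=> [dE _] [dP _]; split.
  move=> [uL [S hS]]; split=> // i j.
  exists (S i j); rewrite -(mul_diag_r L dE) hS (mul_diag_l S dP) mulrC //.
move=> [uL h]; split=> //.
have /fin_all_exists [u hu] : forall i, exists f : 'I_n -> R,
   forall j, L i j * E j j = f j * Phi i i.
  move=> i; exact: (fin_all_exists (h i)).
exists (\matrix_(i, j) u i j); apply/matrixP => i j.
by rewrite (mul_diag_r L dE) (mul_diag_l _ dP) mxE hu mulrC.
Qed.

Lemma dmx_chain n (D : 'M[R]_n) : is_dmatrix D ->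
  forall (i i' : 'I_n), (i <= i')%N -> dvdr (D i i) (D i' i').
Proof.
move=> [_ hD] i i' le.
have : i' = (i + (i' - i))%N :> nat by rewrite subnKC.
move: (i' - i)%N => p; elim: p i' {le} => [|p IH] i' e.
  have -> : i' = i by apply/val_inj => /=; rewrite e addn0.
  exact: dvdr_refl.
have lt : (i + p < n)%N by rewrite (leq_trans _ (ltn_ord i')) // e addnS.
apply: (dvdr_trans (IH (Ordinal lt) erefl)).
by apply: hD => //; rewrite e addnS.
Qed.

Lemma perm_hit n m (s : 'S_n) : (m < n)%N ->
  exists i : 'I_n, (m <= i)%N && (s i <= m)%N.
Proof.
move=> mn; case: (boolP [exists i : 'I_n, (m <= i)%N && (s i <= m)%N]) => [/existsP //|/existsPn hn]; exfalso.
have hlt (x : 'I_m.+1) : ((s^-1)%g (widen_ord mn x) < m)%N.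
  rewrite ltnNge; apply/negP => hm; move: (hn ((s^-1)%g (widen_ord mn x))).
  by rewrite hm permKV /= -ltnS ltn_ord.
pose h (x : 'I_m.+1) : 'I_m := Ordinal (hlt x).
have hi : injective h.
  move=> x y /(congr1 val) /= /val_inj /perm_inj /(congr1 val) /= e.
  exact: val_inj.
by move: (leq_card h hi); rewrite !card_ord ltnn.
Qed.

Lemma det_dvd n m (L : 'M[R]_n) (q : R) : (m < n)%N ->
  (forall i j : 'I_n, (m <= i)%N -> (j <= m)%N -> dvdr q (L i j)) ->
  dvdr q (\det L).
Proof.
move=> mn h; rewrite /determinant.
apply: (big_ind (dvdr q)); [exact: dvdr0 | exact: dvdr_add |] => s _.
apply: dvdr_mull; have [i /andP [h1 h2]] := perm_hit s mn.
rewrite (bigD1 i) //=; apply: dvdr_mulr; exact: h.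
Qed.
End Dv.

Unset Implicit Arguments.
Theorem theorem4p1 (R : idomainType) (hR : elementary_divisor_domain R)
    (n k t : nat) (E Phi : 'M[R]_n)
    (hE : is_dmatrix E) (hPhi : is_dmatrix Phi)
    (hk : (0 < k <= n)%N) (ht : (0 < t <= n)%N)
    (hEk : forall i : 'I_n, (E i i != 0) = (i < k)%N)
    (hPt : forall i : 'I_n, (Phi i i != 0) = (i < t)%N) :
  (dmx_dvd k t Phi E ->
     forall L : 'M[R]_n,
       Lset E Phi L <->
       (L \in unitmx /\
        forall (i j : 'I_n), (j < k)%N ->
          ((i < t)%N -> quot_gcd_dvd (Phi i i) (E j j) (L i j)) /\
          ((t <= i)%N -> L i j = 0)))
  /\
  (~ dmx_dvd k t Phi E -> forall L : 'M[R]_n, ~ Lset E Phi L).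
Proof.
have P0 (i : 'I_n) : (t <= i)%N -> Phi i i = 0.
  by move=> ti; apply/eqP; rewrite -[_ == _]negbK hPt -leqNgt.
have E0 (j : 'I_n) : (k <= j)%N -> E j j = 0.
  by move=> kj; apply/eqP; rewrite -[_ == _]negbK hEk -leqNgt.
split.
  move=> _ L; rewrite Lset_iff //; split.
    move=> [uL h]; split=> // i j jk; split.
      by move=> it; apply: (dvd_qgd hR); exact: h.
    move=> ti; have [c hc] := h i j; rewrite P0 // mulr0 in hc.
    move/eqP: hc; rewrite mulf_eq0 => /orP [/eqP //| /eqP ej].
    by move: (hEk j); rewrite ej eqxx jk.
  move=> [uL h]; split=> // i j; case: (ltnP j k) => jk.
    case: (ltnP i t) => it; first by apply: qgd_dvd; exact: (h i j jk).1 it.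
    by rewrite ((h i j jk).2 it) mul0r; exact: dvdr0.
  by rewrite E0 // mulr0; exact: dvdr0.
move=> nd L /(Lset_iff _ hE hPhi) [uL h]; apply: nd.
have core (m : 'I_n) : (m < k)%N -> dvdr (Phi m m) (E m m).
  move=> mk; have [g [x [y [[q hq] ge hg]]]] := bezout hR (Phi m m) (E m m).
  have g0 : g != 0.
    apply/eqP => g0; case: ge => e he; move: (hEk m); rewrite mk he g0 mulr0.
    by rewrite eqxx.
  have hqL (i j : 'I_n) : (m <= i)%N -> (j <= m)%N -> dvdr q (L i j).
    move=> mi jm; apply: (key_fixed ge hg g0 hq).
    apply: (dvdr_trans (dmx_chain hPhi mi)); apply: (dvdr_trans (h i j)).
    have [c hc] := dmx_chain hE jm; exists c; rewrite hc; ring.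
  have [c hc] := det_dvd (ltn_ord m) hqL.
  move: uL; rewrite unitmxE hc unitrM => /andP [_ uq].
  case: ge => e he; exists (e * q^-1); rewrite he hq.
  by rewrite -mulrA (mulrA q^-1) mulVr // mul1r.
split; last by move=> i ik; exact: core.
rewrite leqNgt; apply/negP => tk.
have tn : (t < n)%N by apply: (leq_trans tk); case/andP: hk.
have := core (Ordinal tn) tk; rewrite P0 //= => [[c hc]].
by move: (hEk (Ordinal tn)); rewrite hc mulr0 eqxx /= tk.
Qed.
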